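(* Let $n\ge 2$. The function $\mathbf{H}:[0,1]^n\to[0,1]$ is a pre-aggregation function.
   Context: For $\mathbf{x}\in[0,1]^n$ let $x_{(1)}\ge\dots\ge x_{(n)}$ be its entries in decreasing order, and define the median $Med(\mathbf{x})=\frac12(x_{(k)}+x_{(k+1)})$ if $n=2k$ and $Med(\mathbf{x})=x_{(k+1)}$ if $n=2k+1$. Define $f_i(\mathbf{x})=\frac1n$ if $x_1=\dots=x_n$, and otherwise $f_i(\mathbf{x})=\frac{1}{n-1}\Big(1-\frac{|x_i-Med(\mathbf{x})|}{\sum_{j=1}^n|x_j-Med(\mathbf{x})|}\Big)$. Then $\mathbf{H}(\mathbf{x})=\sum_{i=1}^n f_i(\mathbf{x})\,x_i$. For a nonzero $\mathbf{r}\in\mathbb{R}^n$, $F:[0,1]^n\to[0,1]$ is $\mathbf{r}$-increasing if $F(\mathbf{x})\le F(x_1+tr_1,\dots,x_n+tr_n)$ for all $\mathbf{x}\in[0,1]^n$ and $t>0$ with $(x_1+tr_1,\dots,x_n+tr_n)\in[0,1]^n$. $F$ is a pre-aggregation function if $F(0,\dots,0)=0$, $F(1,\dots,1)=1$ and $F$ is $\mathbf{r}$-increasing for some nonzero $\mathbf{r}\in[0,1]^n$. *)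

(* Defs.v *)
From mathcomp Require Import all_boot all_order all_algebra.
From mathcomp Require Import reals.
Set Implicit Arguments. Unset Strict Implicit. Unset Printing Implicit Defensive.
Import Order.TTheory GRing.Theory Num.Theory.
Local Open Scope ring_scope.

Section Defs.
Variables (R : realType) (n : nat).

Definition in_unit_cube (x : 'I_n -> R) : Prop := forall i, 0 <= x i <= 1.

(* entries of x sorted in decreasing order: x_(1) >= ... >= x_(n);
   (decr_sorted x)`_j is x_(j+1) (0-indexed) *)
Definition decr_sorted (x : 'I_n -> R) : seq R :=
  sort (fun a b : R => b <= a) [seq x i | i <- enum 'I_n].

(* Med(x) = (x_(k) + x_(k+1))/2 if n = 2k, x_(k+1) if n = 2k+1 (1-indexed) *)
Definition Med (x : 'I_n -> R) : R :=
  let s := decr_sorted x in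
  let k := n./2 in
  if odd n then s`_k else (s`_(k.-1) + s`_k) / 2.

Definition all_equal (x : 'I_n -> R) : bool := [forall i, forall j, x i == x j].

Definition f_weight (x : 'I_n -> R) (i : 'I_n) : R :=
  if all_equal x then n%:R^-1
  else (n.-1)%:R^-1 *
       (1 - `|x i - Med x| / \sum_(j < n) `|x j - Med x|).

Definition H (x : 'I_n -> R) : R := \sum_(i < n) f_weight x i * x i.

Definition r_increasing (F : ('I_n -> R) -> R) (r : 'I_n -> R) : Prop :=
  forall (x : 'I_n -> R) (t : R), in_unit_cube x -> 0 < t ->
    in_unit_cube (fun i => x i + t * r i) ->
    F x <= F (fun i => x i + t * r i).

Definition pre_aggregation (F : ('I_n -> R) -> R) : Prop :=
  (forall x, in_unit_cube x -> 0 <= F x <= 1) /\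
  F (fun _ => 0) = 0 /\ F (fun _ => 1) = 1 /\
  exists r : 'I_n -> R, in_unit_cube r /\ (exists i, r i != 0) /\
    r_increasing F r.

End Defs.

(* Main.v *)
Require Import Defs.
From mathcomp Require Import all_boot all_order all_algebra.
From mathcomp Require Import reals.
From mathcomp Require Import lra zify.
Set Implicit Arguments. Unset Strict Implicit. Unset Printing Implicit Defensive.
Import Order.TTheory GRing.Theory Num.Theory.
Local Open Scope ring_scope.

Section Aux.
Variables (R : realType) (n : nat).
Hypothesis hn : (2 <= n)%N.

Lemma decr_sorted_shift (x : 'I_n -> R) c :
  decr_sorted (fun i => x i + c) = [seq a + c | a <- decr_sorted x].
Proof.
rewrite /decr_sorted.
have -> : [seq x i + c | i <- enum 'I_n] = [seq a + c | a <- [seq x i | i <- enum 'I_n]].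
  by elim: (enum 'I_n) => //= a s ->.
symmetry; apply: (map_sort (leT' := fun a b : R => b <= a)).
by move=> a b /=; rewrite lerD2r.
Qed.

Lemma size_decr (x : 'I_n -> R) : size (decr_sorted x) = n.
Proof. by rewrite /decr_sorted size_sort size_map size_enum_ord. Qed.

Lemma Med_shift (x : 'I_n -> R) c : Med (fun i => x i + c) = Med x + c.
Proof.
rewrite /Med decr_sorted_shift.
have hk : (n./2 < n)%N by rewrite ltn_half_double -addnn; lia.
have hk1 : (n./2.-1 < n)%N by apply: leq_ltn_trans hk; apply: leq_pred.
rewrite !(nth_map 0) ?size_decr //.
case: (odd n) => //.
lra.
Qed.

Lemma all_equal_shift (x : 'I_n -> R) c :
  all_equal (fun i => x i + c) = all_equal x.
Proof.
rewrite /all_equal; apply: eq_forallb => i; apply: eq_forallb => j.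
by rewrite (inj_eq (addIr c)).
Qed.

Lemma f_weight_shift (x : 'I_n -> R) c i :
  f_weight (fun i => x i + c) i = f_weight x i.
Proof.
rewrite /f_weight all_equal_shift Med_shift.
have E : forall j, `|x j + c - (Med x + c)| = `|x j - Med x|.
  by move=> j; congr `|_|; lra.
by rewrite E; under eq_bigr => j _ do rewrite E.
Qed.

Lemma sum_abs_neq0 (x : 'I_n -> R) :
  ~~ all_equal x -> \sum_(j < n) `|x j - Med x| != 0.
Proof.
move=> hne; apply/negP => /eqP /psumr_eq0P h.
have {}h := h (fun j _ => normr_ge0 _).
move/negP: hne; apply; apply/forallP => i; apply/forallP => j.
have hi := h i isT; have hj := h j isT.
move/eqP: hi; rewrite normr_eq0 subr_eq0 => /eqP ->.
by move/eqP: hj; rewrite normr_eq0 subr_eq0 => /eqP ->.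
Qed.

Lemma f_weight_ge0 (x : 'I_n -> R) i : 0 <= f_weight x i.
Proof.
rewrite /f_weight; case: ifP => hA; first by rewrite invr_ge0 ler0n.
apply: mulr_ge0; first by rewrite invr_ge0 ler0n.
have hS := sum_abs_neq0 (negbT hA).
have hS0 : 0 < \sum_(j < n) `|x j - Med x|.
  by rewrite lt0r hS /=; apply: sumr_ge0 => j _.
rewrite subr_ge0 ler_pdivrMr // mul1r.
by rewrite (bigD1 i) //= lerDl; apply: sumr_ge0 => j _.
Qed.

Lemma f_weight_sum (x : 'I_n -> R) : \sum_(i < n) f_weight x i = 1.
Proof.
case hA: (all_equal x); rewrite /f_weight hA.
  rewrite sumr_const card_ord.
  rewrite -[_ *+ n]mulr_natr mulVf //.
  by rewrite pnatr_eq0 -lt0n; lia.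
have hS := sum_abs_neq0 (negbT hA).
rewrite -big_distrr /= sumrB sumr_const card_ord -mulr_suml mulfV //.
have -> : (1 : R) *+ n - 1 = (n.-1)%:R.
  by rewrite -subn1 natrB //; lia.
by rewrite mulVf // pnatr_eq0; lia.
Qed.

End Aux.

Theorem corollary5 (R : realType) (n : nat) (hn : (2 <= n)%N) :
  pre_aggregation (@H R n).
Proof.
have hw := @f_weight_ge0 R n.
have hs := @f_weight_sum R n hn.
split; [|split; [|split]].
- move=> x hx; apply/andP; split.
    by apply: sumr_ge0 => i _; apply: mulr_ge0 => //; case/andP: (hx i).
  rewrite /H -(hs x); apply: ler_sum => i _.
  by rewrite -[leRHS]mulr1; apply: ler_wpM2l => //; case/andP: (hx i).
- by rewrite /H big1 // => i _; rewrite mulr0.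
- by rewrite /H -[RHS](hs (fun _ => 1)); apply: eq_bigr => i _; rewrite mulr1.
- exists (fun _ => 1); split; first by move=> i; rewrite ler01 lexx.
  split; first by exists (Ordinal (ltnW hn)); rewrite oner_neq0.
  move=> x t _ ht _.
  rewrite /H.
  under [X in _ <= X]eq_bigr => i _ do rewrite mulr1 (f_weight_shift hn x t i) mulrDr.
  rewrite big_split /= -mulr_suml hs mul1r.
  by rewrite lerDl ltW.
Qed.
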